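(* Let $d$ be a positive integer and let $l,m>90d$ be integers such that $lm$ is even. There is a directed Hamiltonian cycle $c_{l,m}$ on the rectangle $[1,l]\times[1,m]\subseteq\mathbb{Z}^2$ (with adjacency given by unit vectors) with the following features: (1) the cycle traverses, in the clockwise direction, all the edges of the boundary of the rectangle except one; (2) every edge of the cycle at distance greater than $4$ from the boundary of the rectangle is traversed in the direction $\epsilon^1$ if it lies at even distance from the top row $[1,l]\times\{m\}$, and in the direction $-\epsilon^1$ if it lies at odd distance from the top row.
   Context: A directed Hamiltonian cycle on a finite set $V\subseteq\mathbb{Z}^2$ is a cyclic ordering of all vertices of $V$ in which consecutive vertices differ by a unit vector $\pm\epsilon^1,\pm\epsilon^2$, with edges directed from each vertex to its successor. $\epsilon^1=(1,0)$, $\epsilon^2=(0,1)$; ''clockwise'' refers to the standard orientation of the plane with $\epsilon^2$ pointing up, and the boundary of the rectangle is the cycle formed by its outermost vertices. *)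

(* Defs.v *)
(* Lattice points are pairs of integers (x, y), with
   eps1 = (1,0) and eps2 = (0,1) pointing up. *)
From mathcomp Require Import all_boot all_order all_algebra.
Set Implicit Arguments. Unset Strict Implicit. Unset Printing Implicit Defensive.
Import Order.TTheory GRing.Theory Num.Theory.
Local Open Scope ring_scope.

Definition pt := (int * int)%type.

Definition adjacent (u v : pt) : bool :=
  `|v.1 - u.1| + `|v.2 - u.2| == 1.

Definition in_rect (l m : nat) (p : pt) : bool :=
  (1 <= p.1 <= l%:Z) && (1 <= p.2 <= m%:Z).

(* a directed Hamiltonian cycle on the rectangle, given as the cyclic
   sequence of its vertices (edges go from each vertex to its successor,
   the last vertex to the first) *)
Definition ham_cycle (l m : nat) (c : seq pt) : Prop :=
  [/\ uniq c, (forall p, (p \in c) = in_rect l m p) & cycle adjacent c].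

Definition cyc_edge (c : seq pt) (u v : pt) : bool :=
  (u \in c) && (next c u == v).

Definition bd_cw_edge (l m : nat) (u v : pt) : bool :=
  [&& in_rect l m u, in_rect l m v &
   [|| (u.2 == m%:Z) && (v == (u.1 + 1, u.2)),
       (u.1 == l%:Z) && (v == (u.1, u.2 - 1)),
       (u.2 == 1) && (v == (u.1 - 1, u.2)) |
       (u.1 == 1) && (v == (u.1, u.2 + 1))]].

Definition dist_bd (l m : nat) (p : pt) : int :=
  Num.min (Num.min (p.1 - 1) (l%:Z - p.1)) (Num.min (p.2 - 1) (m%:Z - p.2)).

Definition edge_dist_bd (l m : nat) (u v : pt) : int :=
  Num.min (dist_bd l m u) (dist_bd l m v).

Definition feature1 (l m : nat) (c : seq pt) : Prop :=
  exists u0 v0 : pt,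
    [/\ bd_cw_edge l m u0 v0, ~~ cyc_edge c u0 v0 &
        forall u v, bd_cw_edge l m u v -> (u, v) <> (u0, v0) -> cyc_edge c u v].

Definition feature2 (l m : nat) (c : seq pt) : Prop :=
  forall u v, cyc_edge c u v -> 4 < edge_dist_bd l m u v ->
    if ~~ odd `|m%:Z - u.2|%N then v = (u.1 + 1, u.2) else v = (u.1 - 1, u.2).

(* Main.v *)
Require Import Defs.
From mathcomp Require Import all_boot all_order all_algebra zify.
Import Order.TTheory GRing.Theory Num.Theory.
Local Open Scope ring_scope.

Definition fs (l m : nat) (p : pt) : pt :=
  let x := p.1 in let y := p.2 in let L := l%:Z in let M := m%:Z in
  if y == M then (if x < L then (x+1, y) else (x, y-1))
  else if x == L then (if 1 < y then (x, y-1) else (x-1, y))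
  else if y == 1 then (if 1 < x then (x-1, y) else (x, y+1))
  else if x == 1 then (if y == M-2 then (2, y) else (x, y+1))
  else if x == 2 then (if y == M-1 then (1, y) else if y == 2 then (3, y) else (x, y-1))
  else if odd m && (y <= 4) then
    (if y == 2 then (if x < L-1 then (x+1, y) else (x, y+1))
     else if ~~ odd `|(L-1-x)%R|%N then
       (if y == 3 then (x, 4) else if x == 3 then (x, 5) else (x-1, y))
     else (if y == 4 then (x, 3) else (x-1, y)))
  else if ~~ odd `|(M - y)%R|%N then (if x < L-1 then (x+1, y) else (x, y+1))
  else (if 3 < x then (x-1, y) else if y == M-1 then (2, y) else (x, y+1)).

Definition rk (l m : nat) (p : pt) : int :=
  let x := p.1 in let y := p.2 in let L := l%:Z in let M := m%:Z in
  let K0 := 2*L+2*M-4 in let K1 := K0 + M - 3 in let W := L - 3 in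
  if y == M then x
  else if x == L then L + M - y
  else if y == 1 then L + M - 1 + L - x
  else if x == 1 then (if y == M-1 then 0 else 2*L+M-3+y)
  else if x == 2 then (if y == M-1 then K1 + (M-2)*W else K0 + M-2-y)
  else if odd m && (y <= 4) then
    (if y == 2 then K1 + x - 3
     else K1 + W + 2*(L-1-x) +
       (if ~~ odd `|(L-1-x)%R|%N then (if y == 3 then 0 else 1) else (if y == 4 then 0 else 1)))
  else K1 + (y-2)*W + (if ~~ odd `|(M - y)%R|%N then x-3 else L-1-x).

Ltac dest := repeat (match goal with |- context [if ?b then _ else _] =>
  first [ rewrite (_ : b = false); last (by lia)
        | rewrite (_ : b = true); last (by lia)
        | let H := fresh "H" in case: (boolP b) => H; try (move/eqP: H => H; subst) ] end).

Lemma step (l m : nat) (x y : int) : (10 < l)%N -> (10 < m)%N -> (odd m -> ~~ odd l) ->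
  in_rect l m (x, y) -> (x, y) != (2, m%:Z - 1) ->
  rk l m (fs l m (x, y)) = rk l m (x, y) + 1.
Proof.
rewrite /in_rect /= => hl hm hp /andP[/andP[x1 x2] /andP[y1 y2]] hne.
rewrite /fs /=; dest; rewrite /rk /=; dest; try (by move: hne; rewrite eqxx); lia.
Qed.

Lemma fs_rect (l m : nat) (x y : int) : (10 < l)%N -> (10 < m)%N -> (odd m -> ~~ odd l) ->
  in_rect l m (x, y) -> in_rect l m (fs l m (x, y)).
Proof.
rewrite /in_rect /= => hl hm hp /andP[/andP[x1 x2] /andP[y1 y2]].
rewrite /fs /=; dest; rewrite /=; lia.
Qed.

Lemma fs_adj (l m : nat) (x y : int) : (10 < l)%N -> (10 < m)%N -> (odd m -> ~~ odd l) ->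
  in_rect l m (x, y) -> adjacent (x, y) (fs l m (x, y)).
Proof.
rewrite /in_rect /adjacent /= => hl hm hp /andP[/andP[x1 x2] /andP[y1 y2]].
rewrite /fs /=; dest; rewrite /=; lia.
Qed.

Lemma fs_last (l m : nat) : (10 < l)%N -> (10 < m)%N ->
  fs l m (2, m%:Z - 1) = (1, m%:Z - 1).
Proof. move=> hl hm; rewrite /fs /=; dest; try reflexivity; lia. Qed.

Lemma rk_last (l m : nat) : (10 < l)%N -> (10 < m)%N ->
  rk l m (2, m%:Z - 1) = (l * m)%N%:Z - 1.
Proof. move=> hl hm; rewrite /rk /=; dest; lia. Qed.

Lemma rk_first (l m : nat) : (10 < l)%N -> (10 < m)%N ->
  rk l m (1, m%:Z - 1) = 0.
Proof. move=> hl hm; rewrite /rk /=; dest; lia. Qed.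

Lemma fs_bd (l m : nat) (x y a b : int) : (10 < l)%N -> (10 < m)%N -> (odd m -> ~~ odd l) ->
  bd_cw_edge l m (x, y) (a, b) ->
  ~~ [&& x == 1, y == m%:Z - 2, a == 1 & b == m%:Z - 1] ->
  fs l m (x, y) = (a, b).
Proof.
rewrite /bd_cw_edge /in_rect /= !xpair_eqE /= => hl hm hp H1 H2.
rewrite /fs /=; dest; apply/eqP; rewrite xpair_eqE; lia.
Qed.

Lemma fs_u0 (l m : nat) : (10 < l)%N -> (10 < m)%N ->
  fs l m (1, m%:Z - 2) = (2, m%:Z - 2).
Proof. move=> hl hm; rewrite /fs /=; dest; apply/eqP; rewrite xpair_eqE; lia. Qed.

Lemma fs_deep (l m : nat) (x y : int) : (10 < l)%N -> (10 < m)%N -> (odd m -> ~~ odd l) ->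
  in_rect l m (x, y) -> 4 < edge_dist_bd l m (x, y) (fs l m (x, y)) ->
  if ~~ odd `|(m%:Z - y)%R|%N then fs l m (x, y) = (x + 1, y) else fs l m (x, y) = (x - 1, y).
Proof.
rewrite /in_rect /edge_dist_bd /dist_bd /= => hl hm hp /andP[/andP[x1 x2] /andP[y1 y2]].
rewrite /fs /=; dest; rewrite /=; move=> Hdeep; apply/eqP; rewrite xpair_eqE; lia.
Qed.
Section Main.
Set Implicit Arguments.
Variables (l m : nat).
Hypotheses (hl : (10 < l)%N) (hm : (10 < m)%N) (hp : odd m -> ~~ odd l).
Let f := fs l m.
Let p0 : pt := (1, m%:Z - 1).
Let lst : pt := (2, m%:Z - 1).
Let N := (l * m)%N.

Lemma frect p : in_rect l m p -> in_rect l m (f p).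
Proof. case: p => x y; exact: fs_rect. Qed.

Lemma iter_prop k : (k < N)%N -> in_rect l m (iter k f p0) /\ rk l m (iter k f p0) = k%:Z.
Proof.
elim: k => [|k IH] hk.
  split; last exact: rk_first.
  rewrite /in_rect /p0 /=; lia.
have [hr hrk] := IH (ltnW hk).
rewrite iterS; split; first exact: frect.
have hne : iter k f p0 != lst.
  apply/eqP => E; move: hrk; rewrite E rk_last //; rewrite /N in hk; lia.
move: hr hne hrk; case: (iter k f p0) => x y hr hne hrk.
rewrite /f step // hrk; lia.
Qed.

Definition R : seq pt := [seq (Posz i, Posz j) | i <- iota 1 l, j <- iota 1 m].

Lemma R_uniq : uniq R.
Proof.
apply: allpairs_uniq; try exact: iota_uniq.
by move=> [a b] [c d] _ _ /= [-> ->].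
Qed.

Lemma R_size : size R = N.
Proof. by rewrite size_allpairs !size_iota. Qed.

Lemma R_mem p : (p \in R) = in_rect l m p.
Proof.
apply/allpairsP/idP.
  case=> [[i j]] /= [hi hj ->]; move: hi hj; rewrite !mem_iota /in_rect /=; lia.
case: p => a b; rewrite /in_rect /= => h.
exists (`|a|%N, `|b|%N); rewrite /= !mem_iota; split; try lia.
congr (_, _); lia.
Qed.

Let c := traject f p0 N.

Lemma c_rect p : p \in c -> in_rect l m p.
Proof. by case/trajectP => i hi ->; case: (iter_prop _ hi). Qed.

Lemma c_uniq : uniq c.
Proof.
have E : map (rk l m) c = [seq Posz k | k <- iota 0 N].
  apply: (@eq_from_nth _ 0); first by rewrite !size_map size_traject size_iota.
  move=> i; rewrite size_map size_traject => hi.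
  rewrite (nth_map p0) ?size_traject // nth_traject //.
  rewrite (nth_map 0%N) ?size_iota // nth_iota // add0n.
  by case: (iter_prop _ hi).
have : uniq (map (rk l m) c) by rewrite E map_inj_uniq ?iota_uniq // => a b [].
by move/map_uniq.
Qed.

Lemma c_mem p : (p \in c) = in_rect l m p.
Proof.
rewrite -R_mem.
have h1 : {subset c <= R} by move=> q /c_rect; rewrite R_mem.
have h2 : (size R <= size c)%N by rewrite R_size size_traject.
by have [_ E] := uniq_min_size c_uniq h1 h2; exact: E.
Qed.

Lemma iterN : iter N f p0 = p0.
Proof.
have : lst \in c by rewrite c_mem /in_rect /lst /=; lia.
case/trajectP => i hi E.
have [_ hrk] := iter_prop _ hi.
move: hrk; rewrite -E rk_last // => hi'.
have -> : N = i.+1 by rewrite /N; lia.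
by rewrite iterS -E /f fs_last.
Qed.

Lemma c_cycle : fcycle f c.
Proof.
have hN : N = (N.-1).+1 by rewrite /N; lia.
rewrite /c hN /= rcons_path fpath_traject /= last_traject -iterS -hN iterN.
exact: eqxx.
Qed.

Lemma c_next u : u \in c -> next c u = f u.
Proof. by move=> hu; have /eqP := next_cycle c_cycle hu. Qed.

End Main.

Theorem lemma12p3 (d l m : nat) :
  (0 < d)%N -> (90 * d < l)%N -> (90 * d < m)%N -> ~~ odd (l * m) ->
  exists c : seq pt, [/\ ham_cycle l m c, feature1 l m c & feature2 l m c].
Proof.
move=> hd hl' hm' hodd.
have hl : (10 < l)%N by lia.
have hm : (10 < m)%N by lia.
have hp : odd m -> ~~ odd l by move: hodd; rewrite oddM; case: (odd l); case: (odd m).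
exists (traject (fs l m) (1, m%:Z - 1) (l * m)).
have CM := @c_mem l m hl hm hp.
have CN := @c_next l m hl hm hp.
split.
- split; first exact: (@c_uniq l m hl hm hp).
    exact: CM.
  apply: (sub_in_cycle (P := in_rect l m) (e := frel (fs l m))).
  + move=> u v hu _ /eqP <-; case: u hu => x y hu; exact: fs_adj.
  + by apply/allP => p; rewrite CM.
  + exact: (@c_cycle l m hl hm hp).
- exists (1, m%:Z - 2), (1, m%:Z - 1); split.
  + rewrite /bd_cw_edge /in_rect /= !xpair_eqE; lia.
  + rewrite /cyc_edge; apply/negP => /andP[hu /eqP]; rewrite CN // fs_u0 //.
  + move=> [x y] [a b] hb hne; rewrite /cyc_edge.
    have hu : in_rect l m (x, y) by move: hb; rewrite /bd_cw_edge => /and3P[].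
    rewrite CM hu /= CN ?CM // (@fs_bd l m x y a b hl hm hp hb) ?eqxx //.
    apply/negP => /and4P[/eqP e1 /eqP e2 /eqP e3 /eqP e4]; apply: hne.
    by rewrite e1 e2 e3 e4.
- move=> [x y] v /andP[hu /eqP hv] hdist.
  rewrite CN // in hv; rewrite -hv in hdist *.
  rewrite CM in hu.
  exact: fs_deep.
Qed.
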